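(* Let $p$ be a prime and let $f,f'\in\mathcal{R}$. If $f$ is oblivious to $p$ and $f'$ has a transducer with fewer than $p$ states, then $f'f$ is oblivious to $p$.
   Context: An asynchronous binary transducer is $(S,s_0,t,o)$ with $S$ finite, $s_0\in S$, $t\colon S\times\{0,1\}\to S$, $o\colon S\times\{0,1\}\to\{0,1\}^*$; $t$ and $o$ extend to words: for $s\in S$ and $\sigma_1\sigma_2\cdots$ let $s_1=s$, $s_{n+1}=t(s_n,\sigma_n)$, $t(s,\sigma_1\cdots\sigma_n)=s_{n+1}$, $o(s,\sigma_1\sigma_2\cdots)=o(s_1,\sigma_1)o(s_2,\sigma_2)\cdots$. It is a transducer for a homeomorphism $f$ of $\{0,1\}^\omega$ if $f(\psi)=o(s_0,\psi)$ for all $\psi$; $\mathcal{R}$ is the group of homeomorphisms having a transducer. A state $s$ is accessible if $s=t(s_0,\alpha)$ for some finite word $\alpha$. A cycle is a pair $(c,\gamma)$ with $c\in S$ and $\gamma$ a nonempty finite word with $t(c,\gamma)=c$; its length is $|\gamma|$; it is accessible if $c$ is. A transducer is oblivious to $p$ if it has an accessible cycle whose length is not a multiple of $p$; an element of $\mathcal{R}$ is oblivious to $p$ if some transducer for it is. $f'f$ denotes the composition ($f$ first, then $f'$). *)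

(* Defs.v *)
From mathcomp Require Import all_boot.
Set Implicit Arguments. Unset Strict Implicit. Unset Printing Implicit Defensive.

(* Cantor space {0,1}^omega, with 0 = false, 1 = true. *)
Definition cantor := nat -> bool.

Definition pref (psi : cantor) (n : nat) : seq bool := mkseq psi n.

(* Continuity for the product (Cantor) topology: every output bit depends
   only on a finite prefix of the input. *)
Definition cantor_continuous (f : cantor -> cantor) : Prop :=
  forall (psi : cantor) (n : nat), exists m : nat,
    forall psi' : cantor, (forall i, i < m -> psi' i = psi i) -> f psi' n = f psi n.

Definition cantor_homeo (f : cantor -> cantor) : Prop :=
  cantor_continuous f /\
  exists g : cantor -> cantor,
    cantor_continuous g /\ cancel f g /\ cancel g f.

(* Asynchronous binary transducer (S, s0, t, o), S finite. *)
Record transducer := Transducer {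
  tstate : finType;
  tinit : tstate;
  ttrans : tstate -> bool -> tstate;
  tout : tstate -> bool -> seq bool }.

Fixpoint ttrans_w (T : transducer) (s : tstate T) (w : seq bool) : tstate T :=
  if w is a :: w' then ttrans_w (ttrans s a) w' else s.

Fixpoint tout_w (T : transducer) (s : tstate T) (w : seq bool) : seq bool :=
  if w is a :: w' then tout s a ++ tout_w (ttrans s a) w' else [::].

(* o(s, psi) = phi as infinite words: every finite partial concatenation is a
   prefix of phi and these prefixes have unbounded length. *)
Definition tout_inf_eq (T : transducer) (s : tstate T) (psi phi : cantor) : Prop :=
  (forall n, let u := tout_w s (pref psi n) in u = pref phi (size u)) /\
  (forall m, exists n, m <= size (tout_w s (pref psi n))).

Definition transducer_for (T : transducer) (f : cantor -> cantor) : Prop :=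
  forall psi : cantor, tout_inf_eq (tinit T) psi (f psi).

Definition in_R (f : cantor -> cantor) : Prop :=
  cantor_homeo f /\ exists T : transducer, transducer_for T f.

Definition accessible (T : transducer) (s : tstate T) : Prop :=
  exists alpha : seq bool, s = ttrans_w (tinit T) alpha.

Definition is_cycle (T : transducer) (c : tstate T) (gamma : seq bool) : Prop :=
  gamma != [::] /\ ttrans_w c gamma = c.

Definition transducer_oblivious (p : nat) (T : transducer) : Prop :=
  exists (c : tstate T) (gamma : seq bool),
    is_cycle c gamma /\ accessible c /\ ~~ (p %| size gamma).

Definition oblivious (p : nat) (f : cantor -> cantor) : Prop :=
  exists T : transducer, transducer_for T f /\ transducer_oblivious p T.

(* Main.v *)
Require Import Defs.
From mathcomp Require Import all_boot.
Set Implicit Arguments. Unset Strict Implicit. Unset Printing Implicit Defensive.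

Lemma ttrans_w_cat (T : transducer) (s : tstate T) w1 w2 :
  ttrans_w s (w1 ++ w2) = ttrans_w (ttrans_w s w1) w2.
Proof. by elim: w1 s => //= a w IH s; rewrite IH. Qed.

Lemma tout_w_cat (T : transducer) (s : tstate T) w1 w2 :
  tout_w s (w1 ++ w2) = tout_w s w1 ++ tout_w (ttrans_w s w1) w2.
Proof. by elim: w1 s => //= a w IH s; rewrite IH catA. Qed.

Definition comp (T T' : transducer) : transducer :=
  @Transducer (tstate T * tstate T')%type (tinit T, tinit T')
    (fun st a => (ttrans st.1 a, ttrans_w st.2 (tout st.1 a)))
    (fun st a => tout_w st.2 (tout st.1 a)).

Lemma comp_ttrans_w (T T' : transducer) (s : tstate T) (s' : tstate T') w :
  @ttrans_w (comp T T') (s, s') w = (ttrans_w s w, ttrans_w s' (tout_w s w)).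
Proof. by elim: w s s' => //= a w IH s s'; rewrite IH ttrans_w_cat. Qed.

Lemma comp_tout_w (T T' : transducer) (s : tstate T) (s' : tstate T') w :
  @tout_w (comp T T') (s, s') w = tout_w s' (tout_w s w).
Proof. by elim: w s s' => //= a w IH s s'; rewrite IH tout_w_cat. Qed.

Lemma pref_add (psi : cantor) m k :
  pref psi (m + k) = pref psi m ++ map psi (iota m k).
Proof. by rewrite /pref /mkseq iotaD map_cat. Qed.

Lemma comp_for (T T' : transducer) f f' :
  transducer_for T f -> transducer_for T' f' ->
  transducer_for (comp T T') (fun psi => f' (f psi)).
Proof.
move=> HT HT' psi; split.
- move=> n /=; rewrite comp_tout_w.
  have [H1 _] := HT psi; have [H2 _] := HT' (f psi).
  rewrite (H1 n); exact: H2.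
- move=> M; have [_ H2] := HT' (f psi); have [m Hm] := H2 M.
  have [H1 H1'] := HT psi; have [n Hn] := H1' m.
  exists n; rewrite /= comp_tout_w (H1 n).
  move: (size _) Hn => k Hk.
  rewrite -(subnKC Hk) pref_add tout_w_cat size_cat.
  exact: leq_trans Hm (leq_addr _ _).
Qed.

Definition pw (g : seq bool) k := flatten (nseq k g).

Lemma size_pw g k : size (pw g k) = k * size g.
Proof. by elim: k => //= k IH; rewrite size_cat IH mulSn. Qed.

Lemma pw_cycle (T T' : transducer) (c : tstate T) (x : tstate T') gamma k :
  ttrans_w c gamma = c ->
  @ttrans_w (comp T T') (c, x) (pw gamma k) =
  (c, iter k (fun y => ttrans_w y (tout_w c gamma)) x).
Proof.
move=> Hc; elim: k x => // k IH x.
rewrite /pw /= ttrans_w_cat comp_ttrans_w Hc.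
by rewrite -/(pw gamma k) IH -iterSr.
Qed.

Theorem lemma3p4 (p : nat) (f f' : cantor -> cantor) :
  prime p -> in_R f -> in_R f' ->
  oblivious p f ->
  (exists T : transducer, transducer_for T f' /\ #|tstate T| < p) ->
  oblivious p (fun psi => f' (f psi)).
Proof.
move=> pp _ _ [T [HT [c [gamma [[gne Hc] [[alpha Ha] ndvd]]]]]] [T' [HT' Hcard]].
exists (comp T T'); split; first exact: comp_for.
pose g := fun y : tstate T' => ttrans_w y (tout_w c gamma).
pose s1 := ttrans_w (tinit T') (tout_w (tinit T) alpha).
pose n := #|tstate T'|.
have Hloop : looping g s1 n.
  apply/negPn; rewrite -looping_uniq; apply/negP => U.
  have := card_uniqP U; rewrite size_traject => E.
  have := max_card (mem (traject g s1 n.+1)); rewrite E /n ltnn //.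
move: Hloop; rewrite /looping => /trajectP [i ltin Ei].
set d := n - i.
have d0 : 0 < d by rewrite subn_gt0.
exists (c, iter i g s1), (pw gamma d); split; [split|split].
- rewrite -size_eq0 size_pw muln_eq0 negb_or size_eq0 gne andbT -lt0n //.
- rewrite pw_cycle // -/g -iterD /d subnK; last exact: ltnW.
  by rewrite -Ei.
- exists (alpha ++ pw gamma i).
  rewrite ttrans_w_cat /= comp_ttrans_w -Ha pw_cycle //.
- rewrite size_pw Euclid_dvdM // negb_or ndvd andbT.
  apply/negP => /(dvdn_leq d0) le.
  have : d < p by apply: leq_ltn_trans (leq_subr _ _) Hcard.
  by rewrite ltnNge le.
Qed.
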